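(* Let $A$ be a finite set of options and consider $V\ge1$ votes, each a truncated ranking with possible ties, interpreted as in the context, with associated Llull matrix $v$ and path scores $v^*$. Let $x,y\in A$ be distinct and assume $x$ dominates $y$ in the sense of Pareto. Then for every $a\in A\setminus\{x,y\}$: $v_{xa}\ge v_{ya}$, $v_{ay}\ge v_{ax}$, $v^*_{xa}\ge v^*_{ya}$, $v^*_{ay}\ge v^*_{ax}$; and moreover $v^*_{xy}\ge v^*_{yx}$.
   Context: A truncated ranking with ties is a weak order on a subset $R$ of $A$ (the ranked options). It is interpreted as follows: for ranked options, $x$ is preferred to $y$ if $x$ is strictly above $y$, and $x,y$ are ranked equally if they are tied; every ranked option is preferred to every unranked option; no comparison is made between two unranked options. The Llull matrix is $v_{xy}=(\#\{\text{votes preferring }x\text{ to }y\}+\tfrac12\#\{\text{votes ranking }x,y\text{ equally}\})/V$. Path scores: $v^*_{xy}=\max\min(v_{x_0x_1},\dots,v_{x_{m-1}x_m})$ over all paths $x_0\dots x_m$ ($m\ge1$, $x_0=x$, $x_m=y$, $x_i$ pairwise distinct). $x$ dominates $y$ in the sense of Pareto if every vote (as interpreted) either prefers $x$ to $y$ or ranks $x$ and $y$ equally, and at least one vote prefers $x$ to $y$. *)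

(* Defs.v *)
From mathcomp Require Import all_boot all_order all_algebra.
Set Implicit Arguments. Unset Strict Implicit. Unset Printing Implicit Defensive.
Import Order.TTheory GRing.Theory Num.Theory.
Local Open Scope ring_scope.

(* A truncated ranking with ties on the options A is encoded as a level map
   b : A -> option nat : [Some k] means "ranked at level k" (smaller level =
   higher position; equal levels = tied), [None] means "unranked".  Every weak
   order on a subset R of a finite A arises this way (and conversely). *)
Definition ranking (A : finType) := A -> option nat.

Definition prefers (A : finType) (b : ranking A) (x y : A) : bool :=
  match b x, b y with
  | Some i, Some j => (i < j)%N
  | Some _, None => true
  | _, _ => false
  end.

Definition ranked_equally (A : finType) (b : ranking A) (x y : A) : bool :=
  match b x, b y with
  | Some i, Some j => i == j
  | _, _ => false
  end.

Definition llull (A : finType) (V : nat) (b : 'I_V -> ranking A) (x y : A) : rat :=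
  ((#|[set i | prefers (b i) x y]|)%:R
    + (#|[set i | ranked_equally (b i) x y]|)%:R / 2) / V%:R.

(* min of v along the path x, p_1, ..., p_m  (only used for p nonempty) *)
Fixpoint path_min (A : finType) (v : A -> A -> rat) (x : A) (p : seq A) : rat :=
  match p with
  | [::] => 1
  | [:: y] => v x y
  | y :: p' => Num.min (v x y) (path_min v y p')
  end.

Definition is_path_from_to (A : finType) (x y : A) (p : seq A) : bool :=
  [&& (0 < size p)%N, uniq (x :: p) & last x p == y].

(* Simple paths have at most #|A| vertices, so t ranges over tuples of length
   n <= #|A|.  All values are >= 0, so 0 is a neutral default (the set of
   paths is nonempty when x <> y). *)
Definition path_score (A : finType) (v : A -> A -> rat) (x y : A) : rat :=
  \big[Num.max/0]_(n < #|A|.+1)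
    \big[Num.max/0]_(t : n.-tuple A | is_path_from_to x y t) path_min v x t.

Definition pareto_dominates (A : finType) (V : nat) (b : 'I_V -> ranking A)
  (x y : A) : Prop :=
  (forall i, prefers (b i) x y || ranked_equally (b i) x y) /\
  (exists i, prefers (b i) x y).

(* Main.v *)
Require Import Defs.
From mathcomp Require Import all_boot all_order all_algebra all_fingroup.
From mathcomp Require Import zify ring lra.
Import Order.TTheory GRing.Theory Num.Theory.
Local Open Scope ring_scope.
Set Implicit Arguments. Unset Strict Implicit.

Definition sc (A : finType) (bi : ranking A) (u w : A) : rat :=
  (prefers bi u w)%:R + (ranked_equally bi u w)%:R / 2.

Definition scn (i k : nat) : rat := (i < k)%N%:R + (i == k)%:R / 2.

Lemma scn_ge0 i k : 0 <= scn i k.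
Proof. by rewrite /scn; case: (i < k)%N; case: (i == k) => /=; lra. Qed.

Lemma scn_mono i j k : (i <= j)%N -> scn j k <= scn i k.
Proof.
move=> hij; rewrite /scn; case: (ltngtP j k) => hjk.
- have hik : (i < k)%N := leq_ltn_trans hij hjk.
  by rewrite hik (ltn_eqF hik) /=; lra.
- by have := scn_ge0 i k; rewrite /scn /=; lra.
- subst; move: hij; rewrite leq_eqVlt => /orP [/eqP ->|h].
    by rewrite ltnn eqxx /=; lra.
  by rewrite h (ltn_eqF h) /=; lra.
Qed.

Lemma scn_mono2 i j k : (i <= j)%N -> scn k i <= scn k j.
Proof.
move=> hij; rewrite /scn; case: (ltngtP k i) => hki.
- have hkj : (k < j)%N := leq_trans hki hij.
  by rewrite hkj (ltn_eqF hkj) /=; lra.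
- by case: (k < j)%N; case: (k == j) => /=; lra.
- subst; move: hij; rewrite leq_eqVlt => /orP [/eqP ->|h].
    by rewrite ltnn eqxx /=; lra.
  by rewrite h (ltn_eqF h) /=; lra.
Qed.

Lemma L1 (A : finType) (bi : ranking A) (x y a : A) :
  prefers bi x y || ranked_equally bi x y -> sc bi y a <= sc bi x a.
Proof.
rewrite /sc /prefers /ranked_equally.
case: (bi x) => [i|]; case: (bi y) => [j|]; case: (bi a) => [k|] /=; try (move=> hF; discriminate hF).
- move=> h; apply: (scn_mono k); case/orP: h => [/ltnW|/eqP->] //.
- by move=> _; lra.
- by move=> _; have := scn_ge0 i k; rewrite /scn; lra.
- by move=> _; lra.
Qed.

Lemma L2 (A : finType) (bi : ranking A) (x y a : A) :
  prefers bi x y || ranked_equally bi x y -> sc bi a x <= sc bi a y.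
Proof.
rewrite /sc /prefers /ranked_equally.
case: (bi x) => [i|]; case: (bi y) => [j|]; case: (bi a) => [k|] /=; try (move=> hF; discriminate hF).
- move=> h; apply: (scn_mono2 k); case/orP: h => [/ltnW|/eqP->] //.
- by move=> _; lra.
- by move=> _; case: (ltngtP k i) => /=; lra.
- by move=> _; lra.
Qed.

Lemma llullE (A : finType) (V : nat) (b : 'I_V -> ranking A) (u w : A) :
  llull b u w = (\sum_i sc (b i) u w) / V%:R.
Proof.
rewrite /llull /sc big_split /= -mulr_suml.
have cs : forall P : pred 'I_V, (#|[set i | P i]|)%:R = \sum_i ((P i)%:R : rat).
  move=> P; rewrite -sum1_card natr_sum big_mkcond /=; apply: eq_bigr => i _.
  by rewrite inE; case: (P i).
by rewrite !cs.
Qed.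

Lemma le_bigmax_seq (I : eqType) (r : seq I) (P : pred I) (F : I -> rat) i :
  i \in r -> P i -> F i <= \big[Num.max/0]_(j <- r | P j) F j.
Proof.
elim: r => // j r IH; rewrite inE big_cons => /orP [/eqP <- | ir] Pi.
  by rewrite Pi le_max lexx.
case: (P j); rewrite ?le_max IH ?orbT //.
Qed.

Lemma bigmax_le (I : Type) (r : seq I) (P : pred I) (F : I -> rat) c :
  0 <= c -> (forall i, P i -> F i <= c) -> \big[Num.max/0]_(j <- r | P j) F j <= c.
Proof.
move=> c0 H; elim/big_ind: _ => //; first by move=> a b ha hb; rewrite ge_max ha hb.
Qed.

Lemma path_min_cons (A : finType) (v : A -> A -> rat) u w s :
  s != [::] -> path_min v u (w :: s) = Num.min (v u w) (path_min v w s).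
Proof. by case: s. Qed.

Lemma path_score_ge (A : finType) (v : A -> A -> rat) u w p :
  is_path_from_to u w p -> path_min v u p <= path_score v u w.
Proof.
move=> hp; have := hp; case/and3P=> _ hu _.
have hs : (size p < #|A|.+1)%N.
  have := card_uniqP hu; rewrite /= => e; have := max_card (mem (u :: p)); rewrite e /=; lia.
rewrite /path_score.
apply: le_trans _ (@le_bigmax_seq _ _ (fun _ => true)
  ( fun n : 'I_#|A|.+1 => \big[Num.max/0]_(t : n.-tuple A | is_path_from_to u w t) path_min v u t)
  _ (mem_index_enum (Ordinal hs)) isT).
rewrite /=.
exact: (@le_bigmax_seq _ _ (fun t : (size p).-tuple A => is_path_from_to u w t)
   (fun t => path_min v u t) _ (mem_index_enum (in_tuple p))).
Qed.

Lemma path_score_le (A : finType) (v : A -> A -> rat) u w c :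
  0 <= c -> (forall p, is_path_from_to u w p -> path_min v u p <= c) ->
  path_score v u w <= c.
Proof.
move=> c0 H; apply: bigmax_le => // n _; apply: bigmax_le => // t ht.
exact: H.
Qed.

Lemma path_min_suffix (A : finType) (v : A -> A -> rat) p1 z q u :
  q != [::] -> path_min v u (p1 ++ z :: q) <= path_min v z q.
Proof.
move=> qn; elim: p1 u => [|w p1 IH] u.
  by rewrite path_min_cons // ge_min lexx orbT.
rewrite cat_cons (@path_min_cons _ _ _ _ (p1 ++ z :: q)); last by case: p1 {IH}.
by rewrite ge_min IH orbT.
Qed.

Lemma path_min_prefix (A : finType) (v : A -> A -> rat) p1 q u :
  p1 != [::] -> path_min v u (p1 ++ q) <= path_min v u p1.
Proof.
elim: p1 u => [|w p1 IH] u // _.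
case: p1 IH => [|w' p1] IH /=.
  by clear IH; case: q => //= *; rewrite ge_min lexx.
by rewrite le_min !ge_min lexx /= IH ?orbT.
Qed.

Lemma path_min_map (A : finType) (v : A -> A -> rat) (f : A -> A) u p :
  (forall a c, a \in belast u p -> c \in p -> v a c <= v (f a) (f c)) ->
  path_min v u p <= path_min v (f u) (map f p).
Proof.
elim: p u => [|w p IH] u H //.
have Hw : v u w <= v (f u) (f w) by apply: H; rewrite ?inE eqxx.
have IH' : path_min v w p <= path_min v (f w) (map f p).
  apply: IH => a c ha hc; apply: H; rewrite inE ?hc ?orbT //.
  by apply/orP; right.
case: p IH IH' {H} => [|w' p] _ IH' //=.
by rewrite le_min !ge_min Hw /= IH' orbT.
Qed.

Lemma bigmax_ge0 (I : Type) (r : seq I) (P : pred I) (F : I -> rat) :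
  0 <= \big[Num.max/0]_(j <- r | P j) F j.
Proof.
elim: r => [|j r IH]; first by rewrite big_nil.
by rewrite big_cons; case: (P j); rewrite ?le_max ?IH ?orbT.
Qed.

Lemma path_score_ge0 (A : finType) (v : A -> A -> rat) u w : 0 <= path_score v u w.
Proof. exact: bigmax_ge0. Qed.

Lemma belast_neq (A : finType) (u0 w0 : A) p a :
  is_path_from_to u0 w0 p -> a \in belast u0 p -> a != w0.
Proof.
case/and3P=> _ hu /eqP hl ha; apply/eqP => e; move: hu.
by rewrite lastI rcons_uniq hl -e ha.
Qed.

Section Main.
Variables (A : finType) (V : nat) (b : 'I_V -> ranking A) (x y : A).
Hypothesis V0 : (0 < V)%N.
Hypothesis H : forall i, prefers (b i) x y || ranked_equally (b i) x y.

Lemma scale_le (f g : 'I_V -> rat) : (forall i, f i <= g i) ->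
  (\sum_i f i) / V%:R <= (\sum_i g i) / V%:R.
Proof.
move=> hfg; apply: ler_wpM2r; first by rewrite invr_ge0 ler0n.
by apply: ler_sum => i _.
Qed.

Lemma v1 a : llull b y a <= llull b x a.
Proof. by rewrite !llullE; apply: scale_le => i; apply: L1. Qed.

Lemma v2 a : llull b a x <= llull b a y.
Proof. by rewrite !llullE; apply: scale_le => i; apply: L2. Qed.

Lemma edge u w : u != x -> w != y ->
  llull b u w <= llull b (tperm x y u) (tperm x y w).
Proof.
move=> ux wy; have [->|uy] := eqVneq u y.
  rewrite tpermR; have [->|wx] := eqVneq w x.
    by rewrite tpermL; apply: le_trans (v1 x) (v2 x).
  by rewrite tpermD ?v1 // eq_sym.
rewrite (tpermD (z:=u)) 1?eq_sym //.
have [->|wx] := eqVneq w x; first by rewrite tpermL v2.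
by rewrite tpermD // eq_sym.
Qed.

Lemma swap_path u0 w0 p : is_path_from_to u0 w0 p ->
  (forall a, a \in belast u0 p -> a != x) -> y \notin p ->
  path_min (llull b) u0 p <= path_score (llull b) (tperm x y u0) (tperm x y w0).
Proof.
move=> hp hb hy; apply: (le_trans (@path_min_map _ (llull b) (tperm x y) u0 p _)).
  move=> a c ha hc; apply: edge; first exact: hb.
  by apply/eqP => e; rewrite -e hc in hy.
apply: path_score_ge.
case/and3P: hp => hs hu hl.
rewrite /is_path_from_to size_map hs -map_cons (map_inj_uniq (@perm_inj _ _)) hu.
by rewrite last_map (eqP hl) eqxx.
Qed.

End Main.

Theorem proposition4p1 (A : finType) (V : nat) (b : 'I_V -> ranking A) (x y : A) :
  (0 < V)%N -> x != y -> pareto_dominates b x y ->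
  (forall a : A, a != x -> a != y ->
     [/\ llull b y a <= llull b x a,
         llull b a x <= llull b a y,
         path_score (llull b) y a <= path_score (llull b) x a &
         path_score (llull b) a x <= path_score (llull b) a y]) /\
  path_score (llull b) y x <= path_score (llull b) x y.
Proof.
move=> V0 xy [H _].
have ynp : forall (u w : A) (p : seq A), is_path_from_to u w p -> u \notin p.
  move=> u w p; rewrite /is_path_from_to cons_uniq => /and3P [_ /andP [h _] _]; exact: h.
split.
  move=> a ax ay; split; [exact: v1 | exact: v2 | |].
  - apply: path_score_le; first exact: path_score_ge0.
    move=> p hp; case: (boolP (x \in p)) => hx.
    + case/splitPr: hx hp => p1 p2 hp.
      have hp2 : p2 != [::].
        apply/eqP => e; move: hp; rewrite e; case/and3P => _ _.
        rewrite last_cat /= => /eqP ex.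
        by rewrite ex eqxx in ax.
      apply: (le_trans (@path_min_suffix A (llull b) p1 x p2 y hp2)); apply: path_score_ge.
      case/and3P: hp => _ hu hl.
      apply/and3P; split.
      * by case: p2 hp2 {hl hu}.
      * by move: hu; rewrite -cat_cons cat_uniq => /and3P [_ _ ->].
      * by move: hl; rewrite last_cat.
    + apply: (le_trans (swap_path H hp _ (ynp _ _ _ hp))).
        move=> c hc; have := mem_belast hc; rewrite inE => /orP [/eqP -> | hcp].
          by rewrite eq_sym.
        by apply/eqP => e; rewrite -e hcp in hx.
      by rewrite tpermR tpermD // eq_sym.
  - apply: path_score_le; first exact: path_score_ge0.
    move=> p hp; case: (boolP (y \in p)) => hy.
    + case/splitPr: hy hp => p1 p2 hp.
      rewrite -cat_rcons.
      have hn : rcons p1 y != [::] by rewrite -size_eq0 size_rcons.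
      apply: (le_trans (@path_min_prefix A (llull b) (rcons p1 y) p2 a hn)); apply: path_score_ge.
      case/and3P: hp => _ hu hl.
      apply/and3P; split.
      * by rewrite size_rcons.
      * by move: hu; rewrite -cat_rcons -cat_cons cat_uniq => /and3P [->].
      * by rewrite last_rcons.
    + apply: (le_trans (swap_path H hp (fun c hc => belast_neq hp hc) hy)).
      by rewrite tpermL tpermD // eq_sym.
apply: path_score_le; first exact: path_score_ge0.
move=> p hp.
apply: (le_trans (swap_path H hp (fun c hc => belast_neq hp hc) (ynp _ _ _ hp))).
by rewrite tpermR tpermL.
Qed.
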